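(* Let $X\in\mathbb{R}^{m\times n}$, $\lambda>0$, and let $f:\mathbb{R}^{m\times n}\to\mathbb{R}$ be an arbitrary function. Consider the original R-PCA problem $$\min_{A,E\in\mathbb{R}^{m\times n}} \operatorname{rank}(A)+\lambda f(E)\quad\text{s.t.}\quad X=A+E, \tag{P}$$ and the original R-LatLRR problem $$\min_{Z\in\mathbb{R}^{n\times n},\,L\in\mathbb{R}^{m\times m},\,E\in\mathbb{R}^{m\times n}} \operatorname{rank}(Z)+\operatorname{rank}(L)+\lambda f(E)\quad\text{s.t.}\quad X-E=(X-E)Z+L(X-E). \tag{T}$$ (i) Let $(A^*,E^* )$ be any optimal solution of (P), let $r=\operatorname{rank}(A^* )$, and let $A^*=U_{A^*}\Sigma_{A^*}V_{A^*}^T$ be its skinny SVD. Let $\widetilde W\in\mathbb{R}^{r\times r}$ be any idempotent matrix ($\widetilde W^2=\widetilde W$), and let $S_1\in\mathbb{R}^{n\times r}$, $S_2\in\mathbb{R}^{r\times m}$ be any matrices satisfying $V_{A^*}^TS_1=0$, $S_2U_{A^*}=0$, $\operatorname{rank}(S_1)\le\operatorname{rank}(\widetilde W)$ and $\operatorname{rank}(S_2)\le\operatorname{rank}(I-\widetilde W)$. Then $(Z^*,L^*,E^* )$ is a minimizer of (T), where $$Z^*=V_{A^*}\widetilde WV_{A^*}^T+S_1\widetilde WV_{A^*}^T,\qquad L^*=U_{A^*}\Sigma_{A^*}(I-\widetilde W)\Sigma_{A^*}^{-1}U_{A^*}^T+U_{A^*}\Sigma_{A^*}(I-\widetilde W)S_2.$$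 (ii) Conversely, if $(Z^*,L^*,E^* )$ is any optimal solution of (T), then $(X-E^*,E^* )$ is a minimizer of (P).
   Context: The skinny SVD of a matrix $A$ of rank $r$ is $A=U_A\Sigma_AV_A^T$ with $U_A,V_A$ having $r$ orthonormal columns and $\Sigma_A$ an $r\times r$ diagonal matrix with positive diagonal entries. $I$ denotes the identity matrix of the appropriate size. *)

(* Defs.v *)
From HB Require Import structures.
From mathcomp Require Import all_boot all_order all_algebra.
Set Implicit Arguments. Unset Strict Implicit. Unset Printing Implicit Defensive.
Import Order.TTheory GRing.Theory Num.Theory.
Local Open Scope ring_scope.

Definition is_min_P (R : realFieldType) (m n : nat) (X : 'M[R]_(m, n)) (lam : R)
  (f : 'M[R]_(m, n) -> R) (A E : 'M[R]_(m, n)) : Prop :=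
  X = A + E /\
  forall A' E' : 'M[R]_(m, n), X = A' + E' ->
    (\rank A)%:R + lam * f E <= (\rank A')%:R + lam * f E'.

Definition is_min_T (R : realFieldType) (m n : nat) (X : 'M[R]_(m, n)) (lam : R)
  (f : 'M[R]_(m, n) -> R) (Z : 'M[R]_n) (L : 'M[R]_m) (E : 'M[R]_(m, n)) : Prop :=
  X - E = (X - E) *m Z + L *m (X - E) /\
  forall (Z' : 'M[R]_n) (L' : 'M[R]_m) (E' : 'M[R]_(m, n)),
    X - E' = (X - E') *m Z' + L' *m (X - E') ->
    (\rank Z)%:R + (\rank L)%:R + lam * f E <=
    (\rank Z')%:R + (\rank L')%:R + lam * f E'.

Definition is_skinny_svd (R : realFieldType) (m n r : nat) (A : 'M[R]_(m, n))
  (U : 'M[R]_(m, r)) (d : 'rV[R]_r) (V : 'M[R]_(n, r)) : Prop :=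
  U^T *m U = 1%:M /\ V^T *m V = 1%:M /\ (forall i : 'I_r, 0 < d 0 i) /\
  A = U *m diag_mx d *m V^T.

(* Main.v *)
Require Import Defs.
From HB Require Import structures.
From mathcomp Require Import all_boot all_order all_algebra.
From mathcomp Require Import lra.
Import Order.TTheory GRing.Theory Num.Theory.
Local Open Scope ring_scope.

Lemma rank_feas {R : realFieldType} {m n : nat} {A : 'M[R]_(m, n)} {Z L} :
  A = A *m Z + L *m A -> (\rank A <= \rank Z + \rank L)%N.
Proof.
move=> h; rewrite {1}h; apply: leq_trans (mxrank_add _ _) _.
by apply: leq_add; [exact: mxrankM_maxr | exact: mxrankM_maxl].
Qed.

Lemma rank_idem {R : realFieldType} {r : nat} {W : 'M[R]_r} :
  W *m W = W -> (\rank W + \rank (1%:M - W)%R <= r)%N.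
Proof.
move=> hW; have := @mxrank_mul_min _ _ _ _ W (1%:M - W).
rewrite mulmxBr mulmx1 hW subrr mxrank0 => h.
by rewrite -subn_eq0 -leqn0.
Qed.

Theorem theorem3 (R : realFieldType) (m n : nat) (X : 'M[R]_(m, n)) (lam : R)
  (f : 'M[R]_(m, n) -> R) (hlam : 0 < lam) :
  (forall A E : 'M[R]_(m, n), is_min_P X lam f A E ->
   forall (r : nat) (U : 'M[R]_(m, r)) (d : 'rV[R]_r) (V : 'M[R]_(n, r)),
   r = \rank A -> is_skinny_svd A U d V ->
   forall (W : 'M[R]_r) (S1 : 'M[R]_(n, r)) (S2 : 'M[R]_(r, m)),
   W *m W = W -> V^T *m S1 = 0 -> S2 *m U = 0 ->
   leq (\rank S1) (\rank W) -> leq (\rank S2) (\rank (1%:M - W))  ->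
   is_min_T X lam f
     (V *m W *m V^T + S1 *m W *m V^T)
     (U *m diag_mx d *m (1%:M - W) *m invmx (diag_mx d) *m U^T
        + U *m diag_mx d *m (1%:M - W) *m S2)
     E)
  /\
  (forall (Z : 'M[R]_n) (L : 'M[R]_m) (E : 'M[R]_(m, n)),
   is_min_T X lam f Z L E -> is_min_P X lam f (X - E) E).
Proof.
split.
- move=> A E [hX hopt] r U d V hr [hU [hV [hd hA]]] W S1 S2 hW hS1 hS2 _ _.
  have hXE : X - E = A by rewrite hX addrK.
  split.
  + rewrite hXE.
    have hD : diag_mx d \in unitmx.
      rewrite unitmxE det_diag unitfE; apply/prodf_neq0 => i _.
      by rewrite gt_eqF.
    set D := diag_mx d.
    have e1 : A *m (V *m W *m V^T + S1 *m W *m V^T) = U *m D *m W *m V^T.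
      rewrite hA mulmxDr !mulmxA -(mulmxA _ V^T V) hV mulmx1.
      by rewrite -(mulmxA _ V^T S1) hS1 mulmx0 !mul0mx addr0.
    have e2 : (U *m D *m (1%:M - W) *m invmx D *m U^T
        + U *m D *m (1%:M - W) *m S2) *m A = U *m D *m (1%:M - W) *m V^T.
      rewrite hA mulmxDl !mulmxA -(mulmxA _ U^T U) hU mulmx1.
      rewrite -(mulmxA _ S2 U) hS2 mulmx0 !mul0mx addr0.
      by rewrite -(mulmxA _ (invmx D) D) mulVmx // mulmx1.
    rewrite e1 e2 -mulmxDl -mulmxDr addrC subrK mulmx1 hA.
    done.
  + move=> Z' L' E' hf.
    have h1 := rank_feas hf.
    have h2 := hopt (X - E') E' (esym (subrK _ _)).
    have h3 : (\rank (V *m W *m V^T + S1 *m W *m V^T)%R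
             + \rank (U *m diag_mx d *m (1%:M - W) *m invmx (diag_mx d) *m U^T
        + U *m diag_mx d *m (1%:M - W) *m S2)%R <= \rank A)%N.
      rewrite -hr; apply: leq_trans (rank_idem hW).
      apply: leq_add.
        rewrite -mulmxDl -mulmxDl.
        apply: leq_trans (mxrankM_maxl _ _) _; exact: mxrankM_maxr.
      rewrite -!mulmxA -!mulmxDr.
      apply: leq_trans (mxrankM_maxr _ _) _.
      apply: leq_trans (mxrankM_maxr _ _) _; exact: mxrankM_maxl.
    move: h1 h3; rewrite -(ler_nat R) -(ler_nat R) !natrD => h1 h3.
    lra.
- move=> Z L E [hf hopt]; split; first by rewrite subrK.
  move=> A' E' hX.
  have hA' : X - E' = A' by rewrite hX addrK.
  have hf' : X - E' = (X - E') *m (pinvmx A' *m A') + 0 *m (X - E').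
    by rewrite hA' mul0mx addr0 mulmxA mulmxKpV.
  have h := hopt _ _ _ hf'.
  have h1 := rank_feas hf.
  have h2 : (\rank (pinvmx A' *m A') <= \rank A')%N by exact: mxrankM_maxr.
  move: h h1 h2; rewrite mxrank0 -(ler_nat R) -(ler_nat R) natrD => h h1 h2.
  lra.
Qed.
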